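(* Let $(a_i)_{i\in\mathbb N}\subset\mathbb R_+$ be nonincreasing and let $b_i>0$ for $i\in\mathbb N$. Then for $0<p<1$ and every $k\in\mathbb N$, $\sum_{i=k+1}^\infty a_ib_i\le\Bigl(\sum_{i\in\mathbb N}a_i^pb_i\Bigr)^{1/p}\Bigl(\sum_{i=1}^k b_i\Bigr)^{1-\frac1p}.$ *)

(* Defs.v *)
From HB Require Import structures.
From mathcomp Require Import all_boot all_order all_algebra.
From mathcomp Require Import all_classical all_reals all_analysis.

(* Main.v *)
Require Import Defs.
From HB Require Import structures.
From mathcomp Require Import all_boot all_order all_algebra.
From mathcomp Require Import all_classical all_reals all_analysis.
From mathcomp Require Import lra.
Import Order.TTheory GRing.Theory Num.Theory.
Local Open Scope ring_scope.

Lemma seriesZl_from (R : realType) (f : nat -> \bar R) (x : R) N :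
  (forall i, (N <= i)%N -> (0 <= f i)%E) ->
  (\sum_(N <= i <oo) (x%:E * f i) = x%:E * \sum_(N <= i <oo) f i)%E.
Proof.
move=> f0.
pose g := fun i => if (N <= i)%N then f i else 0%E.
transitivity (\sum_(N <= i <oo) (x%:E * g i))%E.
  apply/congr_lim/funext => n; apply: eq_big_nat => i /andP[hi _].
  by rewrite /g hi.
rewrite nneseriesZl; last by move=> i _; rewrite /g; case: ifP => // /f0.
congr (_ * _)%E; apply/congr_lim/funext => n; apply: eq_big_nat => i /andP[hi _].
by rewrite /g hi.
Qed.

Lemma lee_from (R : realType) (u v : nat -> \bar R) N :
  (forall i, (N <= i)%N -> (0 <= u i)%E) ->
  (forall i, (N <= i)%N -> (u i <= v i)%E) ->
  (\sum_(N <= i <oo) u i <= \sum_(N <= i <oo) v i)%E.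
Proof.
move=> u0 uv.
pose u' := fun i => if (N <= i)%N then u i else 0%E.
pose v' := fun i => if (N <= i)%N then v i else 0%E.
have -> : (\sum_(N <= i <oo) u i = \sum_(N <= i <oo) u' i)%E.
  apply/congr_lim/funext => n; apply: eq_big_nat => i /andP[hi _].
  by rewrite /u' hi.
have -> : (\sum_(N <= i <oo) v i = \sum_(N <= i <oo) v' i)%E.
  apply/congr_lim/funext => n; apply: eq_big_nat => i /andP[hi _].
  by rewrite /v' hi.
apply: lee_nneseries.
  by move=> i hi _; rewrite /u' hi; exact: u0.
by move=> i _; rewrite /u' /v'; case: ifP => // hi; exact: uv.
Qed.

Theorem lemma3p8 (R : realType) (a b : nat -> R) (p : R) (k : nat)
  (ha0 : forall i : nat, (1 <= i)%N -> 0 <= a i)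
  (hadec : forall i j : nat, (1 <= i)%N -> (i <= j)%N -> a j <= a i)
  (hb : forall i : nat, (1 <= i)%N -> 0 < b i)
  (hp0 : 0 < p) (hp1 : p < 1) (hk : (1 <= k)%N) :
  (\sum_(k.+1 <= i <oo) (a i * b i)%:E <=
     poweR (\sum_(1 <= i <oo) ((a i) `^ p * b i)%:E) p^-1
     * ((\sum_(1 <= i < k.+1) b i) `^ (1 - p^-1))%:E)%E.
Proof.
set q := p^-1.
have pq : p * q = 1 by rewrite /q mulfV // gt_eqF.
have q1 : 1 <= q by rewrite /q invf_ge1 // ltW.
have q0 : q != 0 by rewrite gt_eqF // (lt_le_trans _ q1).
set x := a k.+1.
have x0 : 0 <= x by exact: ha0.
set B := \sum_(1 <= i < k.+1) b i.
set H := \sum_(1 <= i < k.+1) a i `^ p * b i.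
have B0 : 0 < B.
  rewrite /B big_ltn ?ltnS //; apply: (lt_le_trans (hb 1%N _)) => //.
  rewrite lerDl big_nat_cond; apply: sumr_ge0 => i /andP[/andP[hi _] _].
  exact: ltW (hb i (leq_trans _ hi)).
have xB : x `^ p * B <= H.
  rewrite /B /H mulr_sumr big_nat_cond [X in _ <= X]big_nat_cond.
  apply: ler_sum => i /andP[/andP[hi hik] _].
  apply: ler_wpM2r; first exact: ltW (hb i hi).
  apply: (ge0_ler_powR (ltW hp0)); rewrite ?nnegrE //; first exact: ha0.
  exact: (hadec i k.+1 hi (ltnW hik)).
set c := x `^ (1 - p).
have H0 : 0 <= H by apply: le_trans xB; rewrite mulr_ge0 ?powR_ge0 ?ltW.
have step1 : (\sum_(k.+1 <= i <oo) (a i * b i)%:E <=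
    c%:E * \sum_(k.+1 <= i <oo) ((a i) `^ p * b i)%:E)%E.
  rewrite -seriesZl_from; last first.
    move=> i hi; rewrite lee_fin mulr_ge0 ?powR_ge0 // ltW // hb //.
    exact: leq_trans hi.
  apply: lee_from.
    move=> i hi; rewrite lee_fin mulr_ge0 //; [apply: ha0 | apply: ltW; apply: hb];
      exact: leq_trans hi.
  move=> i hi; rewrite -EFinM lee_fin.
  have i1 : (1 <= i)%N by exact: leq_trans hi.
  rewrite mulrA; apply: ler_wpM2r; first by rewrite ltW ?hb.
  have e : a i = a i `^ (1 - p) * a i `^ p.
    rewrite -powRD; first by rewrite subrK powRr1 // ha0.
    by rewrite subrK oner_eq0.
  rewrite [X in X <= _]e mulrC (mulrC c); apply: ler_wpM2l; first exact: powR_ge0.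
  apply: (ge0_ler_powR); rewrite ?nnegrE ?subr_ge0; [exact: ltW | exact: ha0 | done |].
  exact: hadec.
have hsplit : (\sum_(1 <= i <oo) ((a i) `^ p * b i)%:E =
    H%:E + \sum_(k.+1 <= i <oo) ((a i) `^ p * b i)%:E)%E.
  rewrite (@nneseries_split _ _ 1 k); last first.
    by move=> i hi; rewrite lee_fin mulr_ge0 ?powR_ge0 // ltW // hb.
  by rewrite add1n sumEFin.
rewrite hsplit; apply: le_trans step1 _.
have T0 : (0 <= \sum_(k.+1 <= i <oo) ((a i) `^ p * b i)%:E)%E.
  apply: nneseries_ge0 => i hi _; rewrite lee_fin mulr_ge0 ?powR_ge0 // ltW // hb //.
  exact: leq_trans hi.
move: T0; case: (\sum_(k.+1 <= i <oo) ((a i) `^ p * b i)%:E)%E => [t| |] //= t0; last first.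
  by rewrite (negbTE q0) gt0_mulye ?lte_fin ?powR_gt0 // leey.
rewrite -EFinM lee_fin.
rewrite lee_fin in t0.
set S := H + t.
have S0 : 0 <= S by rewrite /S; lra.
have tS : t <= S by rewrite /S; lra.
have uB : x `^ p * B <= S by rewrite /S; lra.
have ec : c = (x `^ p) `^ (q - 1) by rewrite /c -powRrM mulrBr pq mulr1.
have B0n : B != 0 by rewrite gt_eqF.
have eB : B `^ (q - 1) * B `^ (1 - q) = 1.
  rewrite -powRD; last by rewrite B0n implybT.
  by rewrite addrA subrK subrr powRr0.
have -> : c * t = (x `^ p) `^ (q - 1) * B `^ (q - 1) * B `^ (1 - q) * t.
  by rewrite ec -(mulrA _ (B `^ (q - 1))) eB mulr1.
rewrite -powRM ?powR_ge0 ?(ltW B0) //.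
have eS : S `^ q = S `^ (q - 1) * S.
  rewrite -{3}(powRr1 S0) -powRD; first by rewrite subrK.
  by rewrite subrK (negbTE q0).
rewrite eS.
have -> : S `^ (q-1) * S * B `^ (1-q) = S `^ (q-1) * B `^ (1-q) * S by rewrite mulrAC.
apply: ler_pM => //; first by rewrite mulr_ge0 ?powR_ge0.
apply: ler_wpM2r; first exact: powR_ge0.
apply: ge0_ler_powR; rewrite ?nnegrE //.
- by rewrite subr_ge0.
- by rewrite mulr_ge0 ?powR_ge0 ?ltW.
Qed.
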